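(* For $n\ge2$ and all $P,Q\in\Gamma_n$, $D_{\Psi I}(P\|Q)\le \frac{10}9 D_{\Psi h}(P\|Q)$.
   Context: $\Gamma_n=\{P=(p_1,\dots,p_n): p_i>0,\ \sum p_i=1\}$. $h(P\|Q)=\frac12\sum_{i=1}^n(\sqrt{p_i}-\sqrt{q_i})^2$; $\Psi(P\|Q)=\sum_{i=1}^n\frac{(p_i-q_i)^2(p_i+q_i)}{p_iq_i}$; $I(P\|Q)=\frac12\Big[\sum_{i=1}^n p_i\ln\frac{2p_i}{p_i+q_i}+\sum_{i=1}^n q_i\ln\frac{2q_i}{p_i+q_i}\Big]$. $D_{\Psi I}=\frac1{16}\Psi-I$, $D_{\Psi h}=\frac1{16}\Psi-h$. *)

(* Defs.v *)
(* concrete reals R. A probability vector of length n is a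
   function p : nat -> R, read on indices 0..n-1. *)
From Stdlib Require Import Reals List.
Open Scope R_scope.

Definition sumn (n : nat) (f : nat -> R) : R :=
  fold_right Rplus 0 (map f (seq 0 n)).

Definition Gamma (n : nat) (p : nat -> R) : Prop :=
  (forall i, (i < n)%nat -> 0 < p i) /\ sumn n p = 1.

Definition hell (n : nat) (p q : nat -> R) : R :=
  / 2 * sumn n (fun i => (sqrt (p i) - sqrt (q i)) ^ 2).

Definition PsiM (n : nat) (p q : nat -> R) : R :=
  sumn n (fun i => (p i - q i) ^ 2 * (p i + q i) / (p i * q i)).

Definition JS (n : nat) (p q : nat -> R) : R :=
  / 2 * (sumn n (fun i => p i * ln (2 * p i / (p i + q i)))
       + sumn n (fun i => q i * ln (2 * q i / (p i + q i)))).

Definition D_PsiI (n : nat) (p q : nat -> R) : R := / 16 * PsiM n p q - JS n p q.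
Definition D_Psih (n : nat) (p q : nat -> R) : R := / 16 * PsiM n p q - hell n p q.

(* Main.v *)
Require Import Defs.
From Stdlib Require Import Reals.
From Coquelicot Require Import Coquelicot.
From Stdlib Require Import Lra Psatz List.
Open Scope R_scope.
Definition K (t : R) := (2*t^2 - 1 - /t^4)/16 - 5 + 5/t + 9/2*ln(2*t^2/(t^2+1)).
Definition dK (t:R) := (t-1)^4*((t^2+1)^2+4*t*(t^2+1)+9*t^2) / (4*t^5*(t^2+1)).
Lemma K_der t : 0 < t -> is_derive K t (dK t).
Proof.
  intro Ht. unfold K, dK. auto_derive.
  - assert (0 < t*t) by nra.
    assert (0 < t*(t*(t*(t*1)))) by (simpl; nra).
    repeat split; try lra; try nra.
    apply Rmult_lt_0_compat; [nra| apply Rinv_0_lt_compat; nra].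
  - field. split; nra.
Qed.
Definition G (t : R) := (t^2-1)^2*(t^2+1)/(16*t^2) - 5*(t-1)^2
   + 9/2*(t^2*ln(2*t^2/(t^2+1)) + ln(2/(t^2+1))).
Lemma G_der t : 0 < t -> is_derive G t (2*t*K t).
Proof.
  intro Ht. unfold G, K. auto_derive.
  - assert (0 < t*t) by nra.
    repeat split; try lra; try nra.
    apply Rmult_lt_0_compat; [nra| apply Rinv_0_lt_compat; nra].
    apply Rmult_lt_0_compat; [nra| apply Rinv_0_lt_compat; nra].
  - replace (2 * (t * (t * 1)) * / (t * (t * 1) + 1)) with (2*t^2/(t^2+1)) by (simpl; field; nra).
    set (L := ln _). field. split; nra.
Qed.
Lemma dK_ge0 t : 0 < t -> 0 <= dK t.
Proof. intro H. unfold dK. apply Rmult_le_pos.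
  apply Rmult_le_pos. replace ((t-1)^4) with (((t-1)^2)^2) by ring. apply pow2_ge_0. nra.
  apply Rlt_le, Rinv_0_lt_compat. assert (0 < t^5) by (apply pow_lt; lra). nra. Qed.
Lemma K1 : K 1 = 0.
Proof. unfold K. replace (2*1^2/(1^2+1)) with 1 by field. rewrite ln_1. field. Qed.
Lemma G1 : G 1 = 0.
Proof. unfold G. replace (2*1^2/(1^2+1)) with 1 by field.
  replace (2/(1^2+1)) with 1 by field. rewrite ln_1. field. Qed.
Lemma minmax_pos t : 0 < t -> 0 < Rmin 1 t /\ 1 <= Rmax 1 t.
Proof. intros; unfold Rmin, Rmax; destruct Rle_dec; lra. Qed.
Lemma K_sign t : 0 < t -> 0 <= (t-1)*K t.
Proof.
  intro Ht. destruct (minmax_pos t Ht) as [Hm HM].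
  destruct (MVT_gen K 1 t dK) as [c [Hc Heq]].
  - intros x Hx. apply K_der. lra.
  - intros x Hx. apply continuity_pt_filterlim. apply (ex_derive_continuous (K:=R_AbsRing) (V:=R_NormedModule)).
    eexists. apply K_der. lra.
  - rewrite K1 in Heq. assert (0 <= dK c) by (apply dK_ge0; lra).
    rewrite Rminus_0_r in Heq; rewrite Heq.
    replace ((t-1)*(dK c*(t-1))) with (dK c * (t-1)^2) by ring. apply Rmult_le_pos; [lra| apply pow2_ge_0].
Qed.
Lemma G_ge0 t : 0 < t -> 0 <= G t.
Proof.
  intro Ht. destruct (minmax_pos t Ht) as [Hm HM].
  destruct (MVT_gen G 1 t (fun x => 2*x*K x)) as [c [Hc Heq]].
  - intros x Hx. apply G_der. lra.
  - intros x Hx. apply continuity_pt_filterlim. apply (ex_derive_continuous (K:=R_AbsRing) (V:=R_NormedModule)).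
    eexists. apply G_der. lra.
  - rewrite G1 in Heq. assert (Hk := K_sign c ltac:(lra)).
    rewrite Rminus_0_r in Heq; rewrite Heq, Rmult_assoc.
    apply Rmult_le_pos; [lra|].
    revert Hc; unfold Rmin, Rmax; destruct Rle_dec; intro Hc.
    + destruct (Req_dec c 1) as [E|E]. subst. rewrite K1. lra.
      assert (0 <= K c). { assert (0 < c - 1) by lra.
        apply (Rmult_le_reg_l (c-1)); lra. } nra.
    + destruct (Req_dec c 1) as [E|E]. subst. rewrite K1. lra.
      assert (K c <= 0). { assert (0 < 1 - c) by lra.
        apply (Rmult_le_reg_l (1-c)); lra. } nra.
Qed.

Lemma sumn_add n f g : sumn n (fun i => f i + g i) = sumn n f + sumn n g.
Proof. unfold sumn. induction (seq 0 n); simpl; [lra| rewrite IHl; lra]. Qed.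
Lemma sumn_scal n c f : sumn n (fun i => c * f i) = c * sumn n f.
Proof. unfold sumn. induction (seq 0 n); simpl; [lra| rewrite IHl; lra]. Qed.
Lemma sumn_nonneg n f : (forall i, (i < n)%nat -> 0 <= f i) -> 0 <= sumn n f.
Proof. unfold sumn. intro H. assert (H' : forall i, In i (seq 0 n) -> 0 <= f i).
  { intros i Hi. apply in_seq in Hi. apply H. lia. }
  clear H. induction (seq 0 n); simpl; [lra|].
  assert (0 <= f a) by (apply H'; left; auto).
  assert (0 <= fold_right Rplus 0 (map f l)) by (apply IHl; intros; apply H'; right; auto).
  lra. Qed.

Lemma term_eq s r : 0 < s -> 0 < r ->
  (s^2 - r^2)^2*(s^2+r^2)/(s^2*r^2) / 16 - 5*(s-r)^2
  + 9/2*(s^2*ln(2*s^2/(s^2+r^2)) + r^2*ln(2*r^2/(s^2+r^2))) = r^2 * G (s/r).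
Proof. intros Hs Hr. unfold G.
  replace (2*(s/r)^2/((s/r)^2+1)) with (2*s^2/(s^2+r^2)) by (field; nra).
  replace (2/((s/r)^2+1)) with (2*r^2/(s^2+r^2)) by (field; nra).
  field. lra. Qed.

Lemma term_ge0 a b : 0 < a -> 0 < b ->
  0 <= /16 * ((a - b)^2*(a+b)/(a*b)) + (-5) * (sqrt a - sqrt b)^2
     + 9/2 * (a * ln (2*a/(a+b)) + b * ln (2*b/(a+b))).
Proof. intros Ha Hb.
  assert (Hs := sqrt_lt_R0 a Ha). assert (Hr := sqrt_lt_R0 b Hb).
  set (s := sqrt a) in *. set (r := sqrt b) in *.
  assert (Ea : a = s^2) by (unfold s; rewrite pow2_sqrt; lra).
  assert (Eb : b = r^2) by (unfold r; rewrite pow2_sqrt; lra).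
  clearbody s r. subst a b.
  replace (/16 * ((s^2 - r^2)^2*(s^2+r^2)/(s^2*r^2)) + (-5) * (s - r)^2
     + 9/2 * (s^2 * ln (2*s^2/(s^2+r^2)) + r^2 * ln (2*r^2/(s^2+r^2))))
  with ((s^2 - r^2)^2*(s^2+r^2)/(s^2*r^2) / 16 - 5*(s-r)^2
  + 9/2*(s^2*ln(2*s^2/(s^2+r^2)) + r^2*ln(2*r^2/(s^2+r^2)))) by (field; nra).
  rewrite term_eq by lra. apply Rmult_le_pos. nra. apply G_ge0.
  unfold Rdiv; apply Rmult_lt_0_compat; [lra| apply Rinv_0_lt_compat; lra].
Qed.

Theorem proposition5p11 (n : nat) (p q : nat -> R) :
  (2 <= n)%nat -> Gamma n p -> Gamma n q ->
  D_PsiI n p q <= 10 / 9 * D_Psih n p q.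
Proof.
  intros _ [Hp _] [Hq _].
  assert (H := sumn_nonneg n (fun i => /16 * ((p i - q i)^2*(p i+q i)/(p i*q i)) + (-5) * (sqrt (p i) - sqrt (q i))^2
     + 9/2 * (p i * ln (2*p i/(p i+q i)) + q i * ln (2*q i/(p i+q i))))
     (fun i Hi => term_ge0 (p i) (q i) (Hp i Hi) (Hq i Hi))).
  rewrite !sumn_add, !sumn_scal, sumn_add in H.
  unfold D_PsiI, D_Psih, JS, hell, PsiM.
  lra.
Qed.
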